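(* Let $\mathcal{X}=\{\boldsymbol{x}_j\}_{j=1}^{N}$ have ground-truth partition $\mathcal{S}^*=\{\mathcal{S}_k^*\}_{k=1}^K$ with $K\ge 2$, let $\omega>0$, and let $\mathcal{Z}^*=\{\boldsymbol{z}_j^*\}_{j=1}^N\subset\mathbb{R}^D\setminus\{\mathbf 0\}$ satisfy the conflict-free condition: $\theta_{\boldsymbol{z}_j^*,\boldsymbol{z}_{j'}^*}=0$ whenever $\boldsymbol{x}_j,\boldsymbol{x}_{j'}$ lie in the same cluster, and $\theta_{\boldsymbol{z}_j^*,\boldsymbol{z}_{j'}^*}\ge\pi/\omega$ whenever they lie in different clusters. Then every constraint derived from $\mathcal{S}^*$ uniquely determines its angle (in the sense defined in the context) if and only if (i) $\mathcal{Z}^*$ is equidistant among clusters, i.e. there is $\theta^*>0$ with $\theta_{\boldsymbol{z}_j^*,\boldsymbol{z}_{j'}^*}=\theta^*$ for all $\boldsymbol{x}_j\in\mathcal{S}_k^*$, $\boldsymbol{x}_{j'}\in\mathcal{S}_{k'}^*$ with $k\ne k'$; and (ii) $\omega=\omega^*:=\pi/\theta^*$.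
   Context: For nonzero vectors $\boldsymbol{u},\boldsymbol{v}$, $\theta_{\boldsymbol{u},\boldsymbol{v}}\in[0,\pi]$ denotes the angle between them. A constraint $(j,j',y)$ derived from $\mathcal{S}^*$ has $y=1$ if $\boldsymbol{x}_j,\boldsymbol{x}_{j'}$ are in the same cluster and $y=0$ otherwise. A zero-loss positive constraint forces angle $0$, while a zero-loss negative constraint only forces angle $\ge\pi/\omega$. ''Every constraint uniquely determines its angle'' means: for every positive constraint $(j,j',1)$ the angle $\theta_{\boldsymbol{z}_j^*,\boldsymbol{z}_{j'}^*}$ equals $0$, and for every negative constraint $(j,j',0)$ the angle $\theta_{\boldsymbol{z}_j^*,\boldsymbol{z}_{j'}^*}$ equals exactly the enforced separation $\pi/\omega$ (rather than being merely bounded below by it). *)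

(* Defs.v *)
From HB Require Import structures.
From mathcomp Require Import all_boot all_order all_algebra.
From mathcomp Require Import all_classical all_reals all_analysis.
Set Implicit Arguments. Unset Strict Implicit. Unset Printing Implicit Defensive.
Import Order.TTheory GRing.Theory Num.Theory.
Local Open Scope ring_scope.

Definition dotv {R : realType} {D : nat} (u v : 'rV[R]_D) : R :=
  \sum_(i < D) u 0 i * v 0 i.
Definition normv {R : realType} {D : nat} (u : 'rV[R]_D) : R :=
  Num.sqrt (dotv u u).

Definition angle {R : realType} {D : nat} (u v : 'rV[R]_D) : R :=
  acos (dotv u v / (normv u * normv v)).

(* Main.v *)
Require Import Defs.
From HB Require Import structures.
From mathcomp Require Import all_boot all_order all_algebra.
From mathcomp Require Import all_classical all_reals all_analysis.
Import Order.TTheory GRing.Theory Num.Theory.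
Local Open Scope ring_scope.

(* Points x_j, j : 'I_N; ground-truth partition given by cluster labels
   lab : 'I_N -> 'I_K (surjective, so every cluster S_k^* is nonempty).
   A constraint (j, j', y) has y = 1 iff lab j = lab j'. *)
Theorem proposition2 (R : realType) (N K D : nat) (lab : 'I_N -> 'I_K)
  (omega : R) (z : 'I_N -> 'rV[R]_D) :
  (2 <= K)%N ->
  (forall k : 'I_K, exists j : 'I_N, lab j = k) ->
  0 < omega ->
  (forall j, z j != 0) ->
  (forall j j', lab j = lab j' -> angle (z j) (z j') = 0) ->
  (forall j j', lab j <> lab j' -> pi / omega <= angle (z j) (z j')) ->
  ((forall j j', lab j = lab j' -> angle (z j) (z j') = 0) /\
   (forall j j', lab j <> lab j' -> angle (z j) (z j') = pi / omega))
  <->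
  (exists theta : R, 0 < theta /\
     (forall j j', lab j <> lab j' -> angle (z j) (z j') = theta) /\
     omega = pi / theta).
Proof.
move=> _ _ om0 _ H0 _.
have pi0 : (0 : R) < pi := pi_gt0 R.
have pin : (pi : R) != 0 by rewrite gt_eqF.
split.
- move=> [_ H2]; exists (pi / omega); split; first by rewrite divr_gt0.
  split=> //.
  by rewrite invf_div mulrC divfK.
- move=> [th [th0 [H2 ->]]]; split=> // j j' ne.
  by rewrite H2 // invf_div mulrC divfK.
Qed.
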